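(* Let $A=\{a_1,\dots,a_k\}$ with $k\ge2$ and let $Z\subseteq A^+$ be a finite code of standard form with $\gcd(|Z_{a_1}|,\dots,|Z_{a_k}|)>1$. Fix $t\in\{1,\dots,k\}$ and $w\in Z_{a_t}$ with $|w|=\min\{|z|: z\in Z\}$. Let $P_w$ be the set of non-empty proper prefixes of $w$, and let $D$ be the set of integers $d\ge2$ dividing all of $|Z_{a_1}|,\dots,|Z_{a_k}|$. For $u\in P_w$ let $Q_u=\{U\subseteq u^{-1}Z_{a_t}: |U|\in D\}$, and for a non-empty finite set $Y$ let $R_Y=\{V\subseteq \bigcap_{y\in Y}Zy^{-1}: |V|=|Z|/|Y|\}$. Then $Z$ is an alt-induced code if and only if there exist $u\in P_w$, $Y\in Q_u$ and $X\in R_Y$ such that $Z=XY$.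
   Context: $A^+$ is the set of non-empty words over $A$; $|w|$ is the length of a word, $|S|$ the cardinality of a set; $XY=\{xy:x\in X,y\in Y\}$. For $a\in A$, $Z_a$ is the set of words of $Z$ beginning with $a$. For a word $u$: $u^{-1}S=\{v\in A^*: uv\in S\}$ and $Su^{-1}=\{v\in A^*: vu\in S\}$. A code is a subset of $A^+$ in which every word has at most one factorization into its elements. A finite code $Z$ over $A$ is of standard form if every word of $Z$ has length at least $2$, it is not the case that all words of $Z$ begin with the same letter, and it is not the case that all words of $Z$ end with the same letter. For non-empty $X,Y\subseteq A^+$, $(X,Y)$ is an alternative code if $XY$ is a code and each element of $XY$ has exactly one factorization $xy$ with $x\in X,y\in Y$ (equivalently, no word admits two different similar alternative factorizations on $(X,Y)$). $Z$ is an alt-induced code if $Z=XY$ for some alternative code $(X,Y)$. *)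

(* Defs.v *)
From mathcomp Require Import all_boot.
Set Implicit Arguments. Unset Strict Implicit. Unset Printing Implicit Defensive.

Section Words.
Variable A : finType.
Notation word := (seq A).

Definition lang := word -> Prop.

Definition is_code (S : lang) : Prop :=
  (forall z, S z -> z <> [::]) /\
  forall xs ys : seq word,
    (forall x, x \in xs -> S x) -> (forall y, y \in ys -> S y) ->
    flatten xs = flatten ys -> xs = ys.

Definition lprod (X Y : lang) : lang :=
  fun w => exists x y, X x /\ Y y /\ w = x ++ y.

Definition alternative_code (X Y : lang) : Prop :=
  (exists x, X x) /\ (exists y, Y y) /\
  (forall x, X x -> x <> [::]) /\ (forall y, Y y -> y <> [::]) /\
  is_code (lprod X Y) /\
  (forall x1 y1 x2 y2, X x1 -> Y y1 -> X x2 -> Y y2 ->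
     x1 ++ y1 = x2 ++ y2 -> x1 = x2 /\ y1 = y2).

Definition alt_induced (Z : lang) : Prop :=
  exists X Y : lang, alternative_code X Y /\ forall z, Z z <-> lprod X Y z.

Definition begins_with (a : A) (z : word) : bool :=
  if z is b :: _ then b == a else false.
Definition ends_with (a : A) (z : word) : bool :=
  if z is _ :: _ then last a z == a else false.
Definition Zstart (Z : seq word) (a : A) : seq word :=
  [seq z <- Z | begins_with a z].

Definition standard_form (Z : seq word) : Prop :=
  (forall z, z \in Z -> 2 <= size z) /\
  ~ (exists a, forall z, z \in Z -> begins_with a z) /\
  ~ (exists a, forall z, z \in Z -> ends_with a z).

Definition gcd_Zstart (Z : seq word) : nat :=
  \big[gcdn/0]_(a : A) size (Zstart Z a).

Definition in_D (Z : seq word) (d : nat) : Prop :=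
  2 <= d /\ forall a : A, d %| size (Zstart Z a).

Definition proper_prefix (u w : word) : Prop :=
  0 < size u < size w /\ u = take (size u) w.

(* U ∈ Q_u (with respect to the letter a = a_t); finite sets are uniq seqs *)
Definition in_Q (Z : seq word) (a : A) (u : word) (U : seq word) : Prop :=
  uniq U /\ (forall v, v \in U -> (u ++ v) \in Zstart Z a) /\ in_D Z (size U).

Definition in_R (Z : seq word) (Y V : seq word) : Prop :=
  uniq V /\ (forall v, v \in V -> forall y, y \in Y -> (v ++ y) \in Z) /\
  size V = size Z %/ size Y.

End Words.

(* Main.v *)
Require Import Defs.
From mathcomp Require Import all_boot.
From Stdlib Require Import ClassicalEpsilon.
Set Implicit Arguments. Unset Strict Implicit. Unset Printing Implicit Defensive.

Section Helpers.
Variable A : finType.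
Notation word := (seq A).

Lemma cat_cancel (x y1 y2 : word) : x ++ y1 = x ++ y2 -> y1 = y2.
Proof. by move=> E; rewrite -(drop_size_cat y1 (erefl (size x))) E drop_size_cat. Qed.

Lemma inj_allpairs (X Y : seq word) : uniq [seq x ++ y | x <- X, y <- Y] ->
  forall x1 y1 x2 y2, x1 \in X -> y1 \in Y -> x2 \in X -> y2 \in Y ->
  x1 ++ y1 = x2 ++ y2 -> x1 = x2 /\ y1 = y2.
Proof.
elim: X => [|x X IH] // Hu x1 y1 x2 y2.
rewrite allpairs_cons cat_uniq in Hu; case/and3P: Hu => Hu1 Hdis Hu2.
have key: forall x' y y', x' \in X -> y \in Y -> y' \in Y -> x ++ y = x' ++ y' -> False.
  move=> x' y y' Hx' Hy Hy' E; move/negP: Hdis; apply; apply/hasP; exists (x' ++ y').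
    by apply/allpairsP; exists (x', y').
  by rewrite -E /= map_f.
rewrite !in_cons.
case/orP => [/eqP-> | H1] Hy1; case/orP => [/eqP-> | H2] Hy2 E.
- by split => //; apply: cat_cancel E.
- by case: (key _ _ _ H2 Hy1 Hy2 E).
- by case: (key _ _ _ H1 Hy2 Hy1 (esym E)).
- exact: IH.
Qed.

Lemma begins_cat (c : A) (x y : word) : x <> [::] -> begins_with c (x ++ y) = begins_with c x.
Proof. by case: x. Qed.

Lemma sizeZ_sum (Z : seq word) : (forall z, z \in Z -> z <> [::]) ->
  size Z = \sum_(c : A) size (Zstart Z c).
Proof.
elim: Z => [|z Z IH] Hne; first by rewrite big1.
rewrite /Zstart /=.
have -> : \sum_(c : A) size (if begins_with c z then z :: [seq z0 <- Z | begins_with c z0]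
                            else [seq z0 <- Z | begins_with c z0])
        = \sum_(c : A) (begins_with c z + size (Zstart Z c)).
  by apply: eq_bigr => c _; case: (begins_with c z).
rewrite big_split /= -IH; last by move=> z' Hz'; apply: Hne; rewrite in_cons Hz' orbT.
case: z Hne => [|b t] Hne; first by case: (Hne [::]); rewrite ?in_cons ?eqxx.
rewrite (bigD1 b) //= eqxx big1 ?add1n //.
by move=> c /negbTE; rewrite eq_sym => ->.
Qed.

Definition decP (P : Prop) : bool := if excluded_middle_informative P then true else false.
Lemma decPP (P : Prop) : reflect P (decP P).
Proof. by rewrite /decP; case: excluded_middle_informative => H; constructor. Qed.

Definition pref (Z : seq word) : seq word :=
  flatten [seq [seq take i z | i <- iota 0 (size z).+1] | z <- Z].
Definition suff (Z : seq word) : seq word :=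
  flatten [seq [seq drop i z | i <- iota 0 (size z).+1] | z <- Z].

Lemma pref_mem (Z : seq word) x y : x ++ y \in Z -> x \in pref Z.
Proof.
move=> H; apply/flatten_mapP; exists (x ++ y) => //.
apply/mapP; exists (size x); last by rewrite take_size_cat.
by rewrite mem_iota /= add0n ltnS size_cat leq_addr.
Qed.

Lemma suff_mem (Z : seq word) x y : x ++ y \in Z -> y \in suff Z.
Proof.
move=> H; apply/flatten_mapP; exists (x ++ y) => //.
apply/mapP; exists (size x); last by rewrite drop_size_cat.
by rewrite mem_iota /= add0n ltnS size_cat leq_addr.
Qed.


Lemma is_code_ext (S T : lang A) : (forall z, S z <-> T z) -> is_code S -> is_code T.
Proof.
move=> E [H1 H2]; split; first by move=> z /E; apply: H1.
move=> xs ys Hx Hy; apply: H2 => [x /Hx|y /Hy] /E //.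
Qed.

Lemma count_ap (c : A) (X Y : seq word) :
  count (begins_with c) [seq x ++ y | x <- X, y <- Y] =
  count (pred1 [::]) X * count (begins_with c) Y +
  size Y * count (fun x => (x != [::]) && begins_with c x) X.
Proof.
elim: X => [|x X IH]; first by rewrite muln0.
rewrite allpairs_cons count_cat IH count_map /=.
case: x => [|b t] /=.
  rewrite (@eq_count _ _ (begins_with c)) //.
  by rewrite addnA add1n mulSn.
rewrite add0n.
have -> : count (preim (cat (b :: t)) (begins_with c)) Y = (b == c) * size Y.
  case: (b =P c) => Hb.
    by rewrite (@eq_count _ _ predT) ?count_predT ?mul1n // => y /=; rewrite Hb eqxx.
  by rewrite (@eq_count _ _ pred0) ?count_pred0 // => y /=; apply/eqP.
by rewrite mulnDr addnCA [(b == c) * _]mulnC.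
Qed.


Lemma backward (Z : seq word) (hZuniq : uniq Z) (hcode : is_code (fun z => z \in Z))
  (hstd : standard_form Z) (a : A) (w : word) (hw : w \in Zstart Z a)
  (hwmin : forall z, z \in Z -> size w <= size z) (u : word) (Y X : seq word) :
  proper_prefix u w -> in_Q Z a u Y -> in_R Z Y X ->
  (forall z, z \in Z <-> lprod (fun x => x \in X) (fun y => y \in Y) z) ->
  alt_induced (fun z => z \in Z).
Proof.
move=> [/andP[hu0 huw] hutake] [hYu [hYZ [hd2 hdiv]]] [hXu [hXY hsX]] hiff.
have hwZ : w \in Z by move: hw; rewrite mem_filter => /andP[].
have Hne : forall z, z \in Z -> z <> [::].
  by move=> z /(proj1 hstd) Hz E; rewrite E in Hz.
have hdZ : size Y %| size Z.
  by rewrite (sizeZ_sum Hne); apply: dvdn_sum => c _; apply: hdiv.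
have hY0 : 0 < size Y by apply: leq_trans hd2.
have hXs : size X * size Y = size Z by rewrite hsX divnK.
pose P := [seq x ++ y | x <- X, y <- Y].
have subZP : {subset Z <= P}.
  move=> z /hiff [x [y [Hx [Hy ->]]]]; apply/allpairsP; by exists (x, y).
have subPZ : {subset P <= Z}.
  by move=> z /allpairsP [[x y] [/= Hx Hy ->]]; apply: hXY.
have uP : uniq P.
  by apply: (leq_size_uniq hZuniq subZP); rewrite size_allpairs hXs.
have inj := inj_allpairs uP.
have hYne : forall y, y \in Y -> y <> [::].
  move=> y /hYZ; rewrite mem_filter => /andP[_ H] E; rewrite E cats0 in H.
  by have := hwmin _ H; rewrite leqNgt huw.
have [y0 hy0] : exists y0, y0 \in Y by case: (Y) hY0 => // y0 s _; exists y0; rewrite in_cons eqxx.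
case: (boolP ([::] \in X)) => hX0; last first.
  exists (fun x => x \in X), (fun y => y \in Y); split => //.
  split.
    case: (X) hXs hwZ => [|x0 s]; last by move=> _ _; exists x0; rewrite in_cons eqxx.
    by rewrite mul0n => E Hw; case: (Z) E Hw.
  split; first by exists y0.
  split; first by move=> x Hx E; subst x; rewrite Hx in hX0.
  split; first exact: hYne.
  split; first exact: (is_code_ext hiff hcode).
  by move=> x1 y1 x2 y2; apply: inj.
have hYZ' : forall y, y \in Y -> y \in Z by move=> y Hy; apply: (hXY [::]).
case Ey0 : y0 => [|c t0]; first by case: (hYne _ hy0).
have hcnt := count_ap c X Y.
have hcZ : count (begins_with c) Z = count (begins_with c) P.
  have hperm : perm_eq Z P.
    by apply: uniq_perm => // z; apply/idP/idP; [exact: subZP|exact: subPZ].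
  by move/permP: hperm => ->.
have := hdiv c; rewrite /Zstart size_filter hcZ hcnt.
rewrite (count_uniq_mem _ hXu) hX0 mul1n dvdn_addl ?dvdn_mulr // => hdc.
have hcpos : 0 < count (begins_with c) Y.
  by rewrite -has_count; apply/hasP; exists y0 => //; rewrite Ey0 /= eqxx.
have hallc : all (begins_with c) Y.
  rewrite all_count eqn_leq count_size /=; exact: dvdn_leq hcpos hdc.
exists (fun x => exists2 x0, x0 \in X & x = rcons x0 c), (fun y => (c :: y) \in Y).
have hiff' : forall z, z \in Z <-> lprod (fun x => exists2 x0, x0 \in X & x = rcons x0 c)
                                  (fun y => (c :: y) \in Y) z.
  move=> z; split.
    move=> /hiff [x [y [Hx [Hy ->]]]].
    have := allP hallc _ Hy; case: y Hy => [|b y'] //= Hy /eqP Eb; subst b.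
    exists (rcons x c), y'; split; [by exists x | split; [done | by rewrite cat_rcons]].
  move=> [x [y [[x0 Hx0 ->] [Hy ->]]]]; rewrite cat_rcons; apply/hiff.
  by exists x0, (c :: y).
split => //; split; first by exists [:: c]; exists [::].
split; first by exists t0; rewrite -Ey0.
split; first by move=> x [x0 _ ->]; case: x0.
split.
  move=> y Hy E; subst y; have := proj1 hstd _ (hYZ' _ Hy); by [].
split; first exact: (is_code_ext hiff' hcode).
move=> x1 y1 x2 y2 [x1' Hx1 ->] Hy1 [x2' Hx2 ->] Hy2; rewrite !cat_rcons => E.
by have [-> [->]] := inj _ _ _ _ Hx1 Hy1 Hx2 Hy2 E.
Qed.


Lemma forward (Z : seq word) (hZuniq : uniq Z)
  (hstd : standard_form Z) (a : A) (w : word) (hw : w \in Zstart Z a)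
  (X Y : lang A) : alternative_code X Y -> (forall z, z \in Z <-> lprod X Y z) ->
  exists u (Ys Xs : seq word),
    proper_prefix u w /\ in_Q Z a u Ys /\ in_R Z Ys Xs /\
    forall z, z \in Z <-> lprod (fun x => x \in Xs) (fun y => y \in Ys) z.
Proof.
move=> [[x0 hx0] [[y0 hy0] [hXne [hYne [_ hinj]]]]] hZ.
pose Xs := undup [seq x <- pref Z | decP (X x)].
pose Ys := undup [seq y <- suff Z | decP (Y y)].
have memX : forall x, x \in Xs <-> X x.
  move=> x; rewrite mem_undup mem_filter; split; first by case/andP => /decPP.
  move=> Hx; apply/andP; split; first exact/decPP.
  by apply: (@pref_mem Z x y0); apply/hZ; exists x, y0.
have memY : forall y, y \in Ys <-> Y y.
  move=> y; rewrite mem_undup mem_filter; split; first by case/andP => /decPP.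
  move=> Hy; apply/andP; split; first exact/decPP.
  by apply: (@suff_mem Z x0 y); apply/hZ; exists x0, y.
have uXs : uniq Xs by apply: undup_uniq.
have uYs : uniq Ys by apply: undup_uniq.
have cnt : forall (q p : pred word), (forall x y, X x -> Y y -> q (x ++ y) = p x) ->
    size [seq z <- Z | q z] = size [seq x <- Xs | p x] * size Ys.
  move=> q p Hqp; rewrite -(size_allpairs cat); apply: perm_size; apply: uniq_perm.
  - exact: filter_uniq.
  - apply: allpairs_uniq; first exact: filter_uniq.
      exact: uYs.
    move=> [x1 y1] [x2 y2] /allpairsP [[x1' y1'] [/= Hx1 Hy1 [-> ->]]].
    move=> /allpairsP [[x2' y2'] [/= Hx2 Hy2 [-> ->]]] /= E.
    move: Hx1 Hx2; rewrite !mem_filter => /andP[_ /memX Hx1] /andP[_ /memX Hx2].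
    by have [-> ->] := hinj _ _ _ _ Hx1 (proj1 (memY _) Hy1) Hx2 (proj1 (memY _) Hy2) E.
  - move=> z; rewrite mem_filter; apply/idP/idP.
      case/andP => Hq /hZ [x [y [Hx [Hy Ez]]]]; apply/allpairsP; exists (x, y).
      rewrite /= mem_filter -(Hqp _ _ Hx Hy) -Ez Hq /=; split => //; by [apply/memX | apply/memY].
    move=> /allpairsP [[x y] [/= Hx Hy ->]]; rewrite mem_filter in Hx.
    case/andP: Hx => Hp /memX Hx; have /memY Hy' := Hy.
    by rewrite Hqp // Hp /=; apply/hZ; exists x, y.
have hwZ : w \in Z by move: hw; rewrite mem_filter => /andP[].
have hwa : begins_with a w by move: hw; rewrite mem_filter => /andP[].
have [u [y1 [Hu [Hy1 Ew]]]] := proj1 (hZ w) hwZ.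
have hsY : 0 < size Ys by case: (Ys) (proj2 (memY y0) hy0).
exists u, Ys, Xs; split.
  split; last by rewrite Ew take_size_cat.
  rewrite Ew size_cat lt0n size_eq0 -{1}(addn0 (size u)) ltn_add2l lt0n size_eq0.
  by apply/andP; split; apply/eqP; [apply: hXne|apply: hYne].
split.
  split => //; split.
    move=> v /memY Hv; rewrite mem_filter; apply/andP; split.
      rewrite begins_cat; last exact: hXne.
      by move: hwa; rewrite Ew begins_cat //; apply: hXne.
    by apply/hZ; exists u, v.
  split.
    rewrite ltnNge; apply/negP => hle.
    have [y2 Eys] : exists y2, Ys = [:: y2].
      by case: (Ys) hsY hle => [|y2 [|? ?]] //; exists y2.
    have hall : forall y, Y y -> y = y2.
      by move=> y /memY; rewrite Eys in_cons orbF => /eqP.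
    apply: (proj2 (proj2 hstd)).
    have /memY Hy2 : y2 \in Ys by rewrite Eys in_cons eqxx.
    case Ey2 : y2 (hYne _ Hy2) => [|b t] // _.
    exists (last b t) => z /hZ [x [y [Hx [Hy ->]]]].
    rewrite (hall _ Hy) Ey2.
    by case: x {Hx} => [|b' x'] /=; rewrite ?last_cat /=.
  move=> c; rewrite /Zstart (cnt _ (begins_with c)) ?dvdn_mull //.
  by move=> x y Hx _; apply: begins_cat; apply: hXne.
split.
  split => //; split.
    by move=> v /memX Hv y /memY Hy; apply/hZ; exists v, y.
  have := cnt predT predT (fun _ _ _ _ => erefl); rewrite !filter_predT => ->.
  by rewrite mulnK.
move=> z; split.
  by move=> /hZ [x [y [Hx [Hy ->]]]]; exists x, y; split; [apply/memX|split; [apply/memY|]].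
by move=> [x [y [/memX Hx [/memY Hy ->]]]]; apply/hZ; exists x, y.
Qed.

End Helpers.

Theorem propositionP (A : finType) (hA : 2 <= #|A|) (Z : seq (seq A))
  (hZuniq : uniq Z) (hcode : is_code (fun z => z \in Z))
  (hstd : standard_form Z) (hgcd : 1 < gcd_Zstart Z)
  (a : A) (w : seq A) (hw : w \in Zstart Z a)
  (hwmin : forall z, z \in Z -> size w <= size z) :
  alt_induced (fun z => z \in Z) <->
  exists u (Y X : seq (seq A)),
    proper_prefix u w /\ in_Q Z a u Y /\ in_R Z Y X /\
    forall z, z \in Z <-> lprod (fun x => x \in X) (fun y => y \in Y) z.
Proof.
split.
  move=> [X [Y [halt hZ]]]; exact: (forward hZuniq hstd hw halt hZ).
move=> [u [Y [X [h1 [h2 [h3 h4]]]]]].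
exact: (backward hZuniq hcode hstd hw hwmin h1 h2 h3 h4).
Qed.
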